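(* Let $n \ge 1$. A general cubic form $p \in H_3(\mathbb{C}^n)$ has a unique representation $$p(x_1,\dots,x_n) = \sum_{1 \le i \le j \le n} \bigl(t_{\{i,j\},i}x_i + t_{\{i,j\},i+1}x_{i+1} + \cdots + t_{\{i,j\},j}x_j\bigr)^3,$$ with $t_{\{i,j\},k} \in \mathbb{C}$. Thus for each pair $i \le j$ the linear form cubed involves only the variables $x_i,\dots,x_j$.
   Context: $H_d(\mathbb{C}^n)$ denotes the complex vector space of homogeneous polynomials (forms) of degree $d$ in $x_1,\dots,x_n$. ''A general $p$ has property P'' means P holds for all $p$ in a nonempty Zariski-open subset of $H_d(\mathbb{C}^n)$. Representations are counted up to permutation of like summands. A summand $f^k$ is identified with $(\zeta f)^k$ whenever $\zeta^k=1$. *)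

(* Defs.v *)
From HB Require Import structures.
From mathcomp Require Import all_boot all_order all_algebra.
Set Implicit Arguments. Unset Strict Implicit. Unset Printing Implicit Defensive.
Import Order.TTheory GRing.Theory Num.Theory.
Local Open Scope ring_scope.

(* Monomials of degree 3 in x_0..x_{n-1}: x_a x_b x_c with a <= b <= c. *)
Definition Mon (n : nat) : finType :=
  {m : 'I_n * 'I_n * 'I_n | ((m.1.1 <= m.1.2) && (m.1.2 <= m.2))%N}.

(* A cubic form in H_3(C^n) = its coefficient vector (coordinates on H_3). *)
Definition cform (C : Type) (n : nat) := Mon n -> C.

Definition eval_form (C : numClosedFieldType) (n : nat) (p : cform C n)
  (x : 'I_n -> C) : C :=
  \sum_(m : Mon n) p m * x (val m).1.1 * x (val m).1.2 * x (val m).2.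

Inductive polyexpr (V : Type) (R : Type) : Type :=
| PVar of V
| PConst of R
| PAdd of polyexpr V R & polyexpr V R
| PMul of polyexpr V R & polyexpr V R.

Fixpoint peval (V : Type) (R : nzRingType) (e : polyexpr V R) (v : V -> R) : R :=
  match e with
  | PVar i => v i
  | PConst c => c
  | PAdd a b => peval a v + peval b v
  | PMul a b => peval a v * peval b v
  end.

(* "A general p has property P": P holds on a nonempty Zariski-open subset of
   H_3(C^n), i.e. on some basic open set {Q <> 0} with Q a polynomial in the
   coefficients that is not identically zero. *)
Definition general (C : numClosedFieldType) (n : nat) (P : cform C n -> Prop) : Prop :=
  exists Q : polyexpr (Mon n) C,
    (exists p0 : cform C n, peval Q p0 != 0) /\
    forall p : cform C n, peval Q p != 0 -> P p.

Definition linf (C : numClosedFieldType) (n : nat) (T : 'I_n -> 'I_n -> 'I_n -> C)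
  (i j : 'I_n) (x : 'I_n -> C) : C :=
  \sum_(k < n | ((i <= k) && (k <= j))%N) T i j k * x k.

Definition is_rep (C : numClosedFieldType) (n : nat) (p : cform C n)
  (T : 'I_n -> 'I_n -> 'I_n -> C) : Prop :=
  forall x : 'I_n -> C,
    eval_form p x = \sum_(i < n) \sum_(j < n | (i <= j)%N) (linf T i j x) ^+ 3.

(* Unique representation: one exists, and any other one has, for every pair
   i <= j, the same cubed summand, i.e. its linear form differs by a cube root
   of unity zeta. *)
Definition unique_rep (C : numClosedFieldType) (n : nat) (p : cform C n) : Prop :=
  exists T, is_rep p T /\
    forall T', is_rep p T' ->
      forall i j : 'I_n, (i <= j)%N ->
        exists zeta : C, zeta ^+ 3 = 1 /\
          forall k : 'I_n, ((i <= k) && (k <= j))%N -> T' i j k = zeta * T i j k.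

(* Main.v *)
Require Import Defs.
From HB Require Import structures.
From mathcomp Require Import all_boot all_order all_algebra.
From mathcomp Require Import ring lra zify.
From Stdlib Require Import FunctionalExtensionality.
Set Implicit Arguments. Unset Strict Implicit. Unset Printing Implicit Defensive.
Import Order.TTheory GRing.Theory Num.Theory.
Local Open Scope ring_scope.


Section Sym.
Variable R : comRingType.

Definition w2n (a b : nat) : R := if a == b then 1 else 2%:R.
Definition w3n (a b c : nat) : R :=
  if a == c then 1 else if (a == b) || (b == c) then 3%:R else 6%:R.

Lemma sym2n (h : nat -> nat -> R) (hs : forall a b, h a b = h b a) N :
  \sum_(0 <= a < N) \sum_(0 <= b < N) h a b =
  \sum_(0 <= a < N) \sum_(0 <= b < N) (if (a <= b)%N then w2n a b * h a b else 0).
Proof.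
elim: N => [|N IH]; first by rewrite !big_geq.
rewrite !big_nat_recr //=.
under eq_bigr => a _ do rewrite big_nat_recr //=.
under [X in _ = X + _]eq_bigr => a _ do rewrite big_nat_recr //=.
rewrite !big_split /= IH.
have E1 : \sum_(0 <= i < N) (if (i <= N)%N then w2n i N * h i N else 0) =
          2%:R * \sum_(0 <= i < N) h i N.
  rewrite big_distrr /=. apply: eq_big_nat => i /andP[_ iN].
  by rewrite (ltnW iN) /w2n (ltn_eqF iN).
have E2 : \sum_(0 <= i < N) (if (N <= i)%N then w2n N i * h N i else 0) = 0.
  by rewrite big1_seq // => i; rewrite mem_index_iota => /andP[_ /andP[_ iN]]; rewrite leqNgt iN.
have E3 : \sum_(0 <= i < N) h N i = \sum_(0 <= i < N) h i N.
  by apply: eq_bigr => i _; rewrite hs.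
rewrite E1 E2 E3 leqnn /w2n eqxx mul1r; ring.
Qed.

Lemma expand3 (F : nat -> nat -> nat -> R) N :
  \sum_(0 <= a < N.+1) \sum_(0 <= b < N.+1) \sum_(0 <= c < N.+1) F a b c =
  \sum_(0 <= a < N) \sum_(0 <= b < N) \sum_(0 <= c < N) F a b c
  + \sum_(0 <= a < N) \sum_(0 <= b < N) F a b N
  + \sum_(0 <= a < N) \sum_(0 <= c < N) F a N c
  + \sum_(0 <= a < N) F a N N
  + \sum_(0 <= b < N) \sum_(0 <= c < N) F N b c
  + \sum_(0 <= b < N) F N b N
  + \sum_(0 <= c < N) F N N c
  + F N N N.
Proof.
have rec1 (G : nat -> R) M : \sum_(0 <= i < M.+1) G i = \sum_(0 <= i < M) G i + G M.
  by rewrite big_nat_recr.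
have E2 a : \sum_(0 <= b < N.+1) \sum_(0 <= c < N.+1) F a b c =
   \sum_(0 <= b < N) \sum_(0 <= c < N) F a b c + \sum_(0 <= b < N) F a b N
   + \sum_(0 <= c < N) F a N c + F a N N.
  rewrite rec1 (eq_bigr _ (fun b _ => rec1 (F a b) N)) rec1 big_split /=; ring.
rewrite (eq_bigr _ (fun a _ => E2 a)) rec1 !big_split /=; ring.
Qed.

Lemma sym3n (g : nat -> nat -> nat -> R)
  (h1 : forall a b c, g a b c = g b a c) (h2 : forall a b c, g a b c = g a c b) N :
  \sum_(0 <= a < N) \sum_(0 <= b < N) \sum_(0 <= c < N) g a b c =
  \sum_(0 <= a < N) \sum_(0 <= b < N) \sum_(0 <= c < N)
     (if (a <= b <= c)%N then w3n a b c * g a b c else 0).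
Proof.
elim: N => [|N IH]; first by rewrite !big_geq.
rewrite !expand3 IH.
set Y := \sum_(0 <= a < N) \sum_(0 <= b < N) g a b N.
set Z := \sum_(0 <= a < N) g a N N.
have L1 : \sum_(0 <= a < N) \sum_(0 <= c < N) g a N c = Y.
  by apply: eq_bigr => a _; apply: eq_bigr => c _; rewrite h2.
have L2 : \sum_(0 <= b < N) \sum_(0 <= c < N) g N b c = Y.
  by apply: eq_bigr => a _; apply: eq_bigr => c _; rewrite h1 h2.
have L3 : \sum_(0 <= b < N) g N b N = Z.
  by apply: eq_bigr => a _; rewrite h1.
have L4 : \sum_(0 <= c < N) g N N c = Z.
  by apply: eq_bigr => a _; rewrite h1 h2.
have R1 : \sum_(0 <= a < N) \sum_(0 <= b < N)
     (if (a <= b <= N)%N then w3n a b N * g a b N else 0) = 3%:R * Y.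
  rewrite /Y (sym2n (h := fun a b => g a b N)); last by move=> a b; rewrite h1.
  rewrite big_distrr /=; apply: eq_big_nat => a /andP[_ aN].
  rewrite big_distrr /=; apply: eq_big_nat => b /andP[_ bN].
  rewrite (ltnW bN) andbT /w3n /w2n (ltn_eqF aN) (ltn_eqF bN) orbF.
  case: (a <= b)%N; last by rewrite mulr0.
  by case: (a == b); rewrite /=; ring.
have R2 : \sum_(0 <= a < N) \sum_(0 <= c < N)
     (if (a <= N <= c)%N then w3n a N c * g a N c else 0) = 0.
  apply: big1_seq => a _; apply: big1_seq => c; rewrite mem_index_iota.
  by move=> /andP[_ /andP[_ cN]]; rewrite [(N <= c)%N]leqNgt cN andbF.
have R3 : \sum_(0 <= a < N)
     (if (a <= N <= N)%N then w3n a N N * g a N N else 0) = 3%:R * Z.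
  rewrite /Z big_distrr /=; apply: eq_big_nat => a /andP[_ aN].
  by rewrite (ltnW aN) leqnn /w3n (ltn_eqF aN) eqxx orbT.
have R4 : \sum_(0 <= b < N) \sum_(0 <= c < N)
     (if (N <= b <= c)%N then w3n N b c * g N b c else 0) = 0.
  apply: big1_seq => b; rewrite mem_index_iota => /andP[_ /andP[_ bN]].
  by apply: big1_seq => c _; rewrite [(N <= b)%N]leqNgt bN.
have R5 : \sum_(0 <= b < N) (if (N <= b <= N)%N then w3n N b N * g N b N else 0) = 0.
  apply: big1_seq => b; rewrite mem_index_iota => /andP[_ /andP[_ bN]].
  by rewrite [(N <= b)%N]leqNgt bN.
have R6 : \sum_(0 <= c < N) (if (N <= N <= c)%N then w3n N N c * g N N c else 0) = 0.
  apply: big1_seq => c; rewrite mem_index_iota => /andP[_ /andP[_ cN]].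
  by rewrite [(N <= c)%N]leqNgt cN andbF.
rewrite L1 L2 L3 L4 R1 R2 R3 R4 R5 R6 leqnn /w3n eqxx mul1r.
rewrite /=; ring.
Qed.
End Sym.


Section Main.
Variable C : numClosedFieldType.
Variable n : nat.
Local Notation I := 'I_n.

Definition ext3 (H : I -> I -> I -> C) (a b c : nat) : C :=
  match (insub a : option I), (insub b : option I), (insub c : option I) with
  | Some x, Some y, Some z => H x y z | _, _, _ => 0 end.

Lemma ext3E H (x y z : I) : ext3 H x y z = H x y z.
Proof. by rewrite /ext3 !valK. Qed.

Lemma sum3_ord (F : nat -> nat -> nat -> C) :
  \sum_(x < n) \sum_(y < n) \sum_(z < n) F x y z =
  \sum_(0 <= a < n) \sum_(0 <= b < n) \sum_(0 <= c < n) F a b c.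
Proof.
rewrite big_mkord; apply: eq_bigr => x _; rewrite big_mkord.
by apply: eq_bigr => y _; rewrite big_mkord.
Qed.

Lemma sym3 (H : I -> I -> I -> C)
  (h1 : forall a b c, H a b c = H b a c) (h2 : forall a b c, H a b c = H a c b) :
  \sum_(a < n) \sum_(b < n) \sum_(c < n) H a b c =
  \sum_(a < n) \sum_(b < n) \sum_(c < n)
     (if (a <= b <= c)%N then w3n C a b c * H a b c else 0).
Proof.
transitivity (\sum_(a < n) \sum_(b < n) \sum_(c < n) ext3 H a b c).
  by do 3!(apply: eq_bigr => ? _); rewrite ext3E.
transitivity (\sum_(a < n) \sum_(b < n) \sum_(c < n)
   (fun a b c : nat => if (a <= b <= c)%N then w3n C a b c * ext3 H a b c else 0) a b c);
  last by do 3!(apply: eq_bigr => ? _); rewrite /= ext3E.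
rewrite sum3_ord (sum3_ord (fun a b c : nat => if (a <= b <= c)%N then w3n C a b c * ext3 H a b c else 0)); apply: sym3n => a b c; rewrite /ext3;
  case: (insub a : option I) => [x|]; case: (insub b : option I) => [y|];
  case: (insub c : option I) => [z|] //.
Qed.

Lemma sum_Mon (F : I * I * I -> C) :
  \sum_(m : Mon n) F (val m) =
  \sum_(a < n) \sum_(b < n) \sum_(c < n) (if (a <= b <= c)%N then F (a, b, c) else 0).
Proof.
rewrite pair_big /= pair_big /= -big_mkcond /=.
rewrite (reindex_omap (val : Mon n -> I * I * I) insub) /=; last first.
  by move=> t Pt; rewrite insubT.
apply: eq_big => [x|x _]; first by rewrite valK eqxx andbT; case: x => -[[a b] c].
by case: x => -[[a b] c].
Qed.

Definition inr (i j k : I) : bool := (i <= k <= j)%N.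
Definition Mk (T : I -> I -> I -> C) i j k : C := if inr i j k then T i j k else 0.
Definition G T (k l m : I) : C :=
  \sum_(i < n) \sum_(j < n | (i <= j)%N) Mk T i j k * Mk T i j l * Mk T i j m.
Definition V T (x : I -> C) : C :=
  \sum_(i < n) \sum_(j < n | (i <= j)%N) (linf T i j x) ^+ 3.

Lemma linfE T i j x : linf T i j x = \sum_(k < n) Mk T i j k * x k.
Proof.
rewrite /linf big_mkcond; apply: eq_bigr => k _; rewrite /Mk /inr.
by case: ifP => _; rewrite ?mul0r.
Qed.

Lemma cube_sum (a : I -> C) :
  (\sum_(k < n) a k) ^+ 3 = \sum_(k < n) \sum_(l < n) \sum_(m < n) a k * a l * a m.
Proof.
rewrite exprS expr2 big_distrlr big_distrlr /=.
apply: eq_bigr => k _; apply: eq_bigr => l _; rewrite mulr_sumr.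
by apply: eq_bigr => m _; rewrite mulrA.
Qed.

Lemma swap_sum (P : I -> I -> bool) (Z : I -> I -> I -> C) :
  \sum_(i < n) \sum_(j < n | P i j) \sum_(k < n) Z i j k =
  \sum_(k < n) \sum_(i < n) \sum_(j < n | P i j) Z i j k.
Proof.
transitivity (\sum_(i < n) \sum_(k < n) \sum_(j < n | P i j) Z i j k).
  by apply: eq_bigr => i _; apply: exchange_big.
exact: exchange_big.
Qed.

Lemma V_expand T x :
  V T x = \sum_(k < n) \sum_(l < n) \sum_(m < n) G T k l m * (x k * x l * x m).
Proof.
rewrite /V.
transitivity (\sum_(i < n) \sum_(j < n | (i <= j)%N) \sum_(k < n) \sum_(l < n) \sum_(m < n)
   (Mk T i j k * Mk T i j l * Mk T i j m) * (x k * x l * x m)).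
  apply: eq_bigr => i _; apply: eq_bigr => j _; rewrite linfE cube_sum.
  by do 3!(apply: eq_bigr => ? _); ring.
rewrite swap_sum; apply: eq_bigr => k _.
rewrite swap_sum; apply: eq_bigr => l _.
rewrite swap_sum; apply: eq_bigr => m _.
rewrite /G mulr_suml; apply: eq_bigr => i _.
by rewrite mulr_suml.
Qed.

Lemma G_sym1 T a b c : G T a b c = G T b a c.
Proof. by apply: eq_bigr => i _; apply: eq_bigr => j _; ring. Qed.
Lemma G_sym2 T a b c : G T a b c = G T a c b.
Proof. by apply: eq_bigr => i _; apply: eq_bigr => j _; ring. Qed.

Lemma V_sorted T x :
  V T x = \sum_(a < n) \sum_(b < n) \sum_(c < n)
     (if (a <= b <= c)%N then w3n C a b c * G T a b c * (x a * x b * x c) else 0).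
Proof.
rewrite V_expand sym3.
- by (do 3!(apply: eq_bigr => ? _)); rewrite !mulrA.
- by move=> a b c; rewrite G_sym1; ring.
- by move=> a b c; rewrite G_sym2; ring.
Qed.

Definition Pc (p : cform C n) (a b c : I) : C :=
  if (insub (a, b, c) : option (Mon n)) is Some m then p m else 0.

Lemma eval_sorted p x :
  eval_form p x = \sum_(a < n) \sum_(b < n) \sum_(c < n)
     (if (a <= b <= c)%N then Pc p a b c * (x a * x b * x c) else 0).
Proof.
rewrite /eval_form.
rewrite (eq_bigr (fun m => (fun t : I * I * I => Pc p t.1.1 t.1.2 t.2 * (x t.1.1 * x t.1.2 * x t.2)) (val m))); last first.
  by move=> m _ /=; rewrite /Pc -!surjective_pairing valK !mulrA.
by rewrite (sum_Mon (fun t : I * I * I => Pc p t.1.1 t.1.2 t.2 * (x t.1.1 * x t.1.2 * x t.2))).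
Qed.

End Main.


Section Alg.
Variable C : numClosedFieldType.
Variable n : nat.
Local Notation I := 'I_n.

Definition data := (C * (I -> C))%type.
Definition w (a b c : I) : C := w3n C a b c.
Definition step (i j : I) (c : I -> I -> I -> C) : data :=
  if i == j then (c i i i, fun _ => 1)
  else let g1 := c i i j / 3%:R in let g2 := c i j j / 3%:R in
       (g1 ^+ 2 / g2, fun k => if k == i then 1 else if k == j then g2 / g1
                               else c i k j / 6%:R / g1).
Definition cub (d : data) (k l m : I) : C := d.1 * d.2 k * d.2 l * d.2 m.
Definition spn (i j : I) : nat := (j - i)%N.
Definition bigger (i j i' j' k m : I) : bool :=
  [&& (i' <= j')%N, (i' <= k)%N, (m <= j')%N & (spn i j < spn i' j')%N].
Definition Res (D : I -> I -> data) (p : cform C n) (i j : I) (k l m : I) : C :=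
  Pc p k l m - w k l m * \sum_(i' < n) \sum_(j' < n | bigger i j i' j' k m) cub (D i' j') k l m.
Fixpoint Fu (f : nat) (p : cform C n) : I -> I -> data :=
  if f is f'.+1 then fun i j => step i j (Res (Fu f' p) p i j)
  else fun _ _ => (0, fun _ => 0).
Definition D p := Fu n p.

Lemma Res_ext (D1 D2 : I -> I -> data) p i j :
  (forall i' j' k m, bigger i j i' j' k m -> D1 i' j' = D2 i' j') ->
  Res D1 p i j = Res D2 p i j.
Proof.
move=> h; do 3!(apply: functional_extensionality => ?); rewrite /Res.
congr (_ - _ * _); apply: eq_bigr => i' _; apply: eq_bigr => j' hb.
by rewrite (h _ _ _ _ hb).
Qed.

Lemma Fu_stab p f (i j : I) : (i <= j)%N -> (n - spn i j <= f)%N ->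
  Fu f.+1 p i j = Fu f p i j.
Proof.
elim: f i j => [|f IH] i j hij hf.
  have := ltn_ord j; rewrite /spn in hf; lia.
rewrite [LHS]/= [RHS]/=; congr step; apply: Res_ext => i' j' k m.
rewrite /bigger => /and4P[h1 h2 h3 h4]; apply: IH => //.
rewrite /spn in hf h4 *; have := ltn_ord j'; lia.
Qed.

Lemma Fu_D p f (i j : I) : (i <= j)%N -> (n - spn i j <= f)%N ->
  Fu f p i j = D p i j.
Proof.
move=> hij hf.
have E : forall b d, (n - spn i j <= b)%N -> Fu (b + d) p i j = Fu b p i j.
  move=> b d hb; elim: d => [|d IHd]; first by rewrite addn0.
  by rewrite addnS Fu_stab // ?IHd //; apply: leq_trans (leq_addr _ _).
have hn : (n - spn i j <= n)%N by apply: leq_subr.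
have E1 := E _ (f - (n - spn i j))%N (leqnn _); rewrite subnKC // in E1.
have E2 := E _ (n - (n - spn i j))%N (leqnn _); rewrite subnKC // in E2.
by rewrite /D E1 E2.
Qed.

Lemma D_fix p (i j : I) : (i <= j)%N -> D p i j = step i j (Res (D p) p i j).
Proof.
move=> hij.
have n0 : (0 < n)%N by apply: leq_ltn_trans (ltn_ord i).
rewrite {1}/D (_ : Fu n p = Fu n.-1.+1 p); last by rewrite prednK.
rewrite /=; congr step; apply: Res_ext => i' j' k m.
rewrite /bigger => /and4P[h1 h2 h3 h4]; apply: Fu_D => //.
rewrite /spn in h4 *; lia.
Qed.

Lemma natn0 k : (k.+1)%:R != 0 :> C.
Proof. by rewrite pnatr_eq0. Qed.

Lemma step_ok (i j l : I) (c : I -> I -> I -> C) :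
  (i <= l <= j)%N -> ((i < j)%N -> c i i j != 0 /\ c i j j != 0) ->
  w i l j * cub (step i j c) i l j = c i l j.
Proof.
move=> /andP[hil hlj] piv; rewrite /w /w3n /cub /step.
have h3 := natn0 2; have h6 := natn0 5.
have [eij|nij] := eqVneq i j.
  have eil : l = i by apply: val_inj; apply/eqP; rewrite eqn_leq hil; rewrite -eij in hlj; rewrite hlj.
  by subst; rewrite !eqxx /= !mulr1 mul1r.
have hij : (i < j)%N by rewrite ltn_neqAle (leq_trans hil hlj) andbT; exact: nij.
have [c1 c2] := piv hij.
rewrite (negbTE (nij : (nat_of_ord i != nat_of_ord j))) /=.
have nji : (j == i) = false by rewrite eq_sym (negbTE nij).
rewrite nji.
have [eil|nil] := eqVneq l i.
  by subst l; rewrite !eqxx /=; field; rewrite ?c1 ?c2 ?h3 ?h6.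
have hil' : (i < l)%N by rewrite ltn_neqAle hil andbT eq_sym; exact: nil.
have nil' : (val i == val l) = false by apply/negbTE; rewrite neq_ltn hil'.
rewrite nil' !eqxx /=.
have [elj|nlj] := eqVneq l j.
  by subst l; rewrite !eqxx /=; field; rewrite ?c1 ?c2 ?h3 ?h6.
have nlj' : (nat_of_ord l == nat_of_ord j) = false by apply/negbTE; exact: nlj.
by rewrite nlj' /=; field; rewrite ?c1 ?c2 ?h3 ?h6.
Qed.

End Alg.


Section Ex.
Variable C : numClosedFieldType.
Variable n : nat.
Local Notation I := 'I_n.

Definition cont (i j k m : I) : bool := [&& (i <= j)%N, (i <= k)%N & (m <= j)%N].

Lemma split_cont (k m : I) (F : I -> I -> C) : (k <= m)%N ->
  \sum_(i < n) \sum_(j < n | cont i j k m) F i j =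
  F k m + \sum_(i < n) \sum_(j < n | bigger k m i j k m) F i j.
Proof.
move=> hkm; rewrite !pair_big_dep /= (bigD1 (k, m)) /=; last first.
  by rewrite /cont hkm !leqnn.
congr (_ + _); apply: eq_bigl => -[a b] /=.
rewrite /cont /bigger /spn xpair_eqE.
apply/idP/idP.
- move=> /andP[/and3P[h1 h2 h3] hne].
  rewrite h1 h2 h3 /=.
  have : (a != k) || (b != m) by rewrite -negb_and.
  rewrite -!(inj_eq val_inj) /=. move=> /orP[/eqP|/eqP] ?; lia.
- move=> /and4P[h1 h2 h3 h4]; rewrite h1 h2 h3 /=.
  rewrite negb_and; case: (eqVneq a k) => [ak|] //=; subst a.
  by apply/negP => /eqP bm; subst b; rewrite ltnn in h4.
Qed.

Definition Tr (p : cform C n) (i j k : I) : C := 3.-root (D p i j).1 * (D p i j).2 k.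
Definition piv (p : cform C n) := forall i j : I, (i < j)%N ->
  Res (D p) p i j i i j != 0 /\ Res (D p) p i j i j j != 0.

Lemma G_Tr p (a b c : I) : (a <= b <= c)%N ->
  G (Tr p) a b c = \sum_(i < n) \sum_(j < n | cont i j a c) cub (D p i j) a b c.
Proof.
move=> /andP[hab hbc]; rewrite /G; apply: eq_bigr => i _.
rewrite big_mkcond [RHS]big_mkcond; apply: eq_bigr => j _.
rewrite /cont /Mk /inr.
case h1: (i <= j)%N => //=.
case h2: (i <= a)%N => /=; last by rewrite mul0r mul0r.
case h3: (c <= j)%N => /=; last first.
  case: ifP => _; last by rewrite !mul0r.
  case: ifP => _; last by rewrite mulr0 mul0r.
  by rewrite andbF mulr0.
have -> : (a <= j)%N by apply: leq_trans hab (leq_trans hbc h3).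
have -> : (i <= b)%N by apply: leq_trans h2 hab.
have -> : (b <= j)%N by apply: leq_trans hbc h3.
have -> : (i <= c)%N by apply: leq_trans h2 (leq_trans hab hbc).
rewrite /= /Tr /cub.
have E : (3.-root (D p i j).1) ^+ 3 = (D p i j).1 by rewrite rootCK.
set r := 3.-root (D p i j).1 in E *; rewrite -E; ring.
Qed.

Lemma existence p : piv p -> is_rep p (Tr p).
Proof.
move=> hp x; rewrite -/(V (Tr p) x) eval_sorted V_sorted.
apply: eq_bigr => a _; apply: eq_bigr => b _; apply: eq_bigr => c _.
case: ifP => // habc; congr (_ * _).
have hac : (a <= c)%N by case/andP: habc; apply: leq_trans.
rewrite G_Tr // split_cont //.
have E := step_ok habc (hp a c).
rewrite -D_fix // in E.
rewrite mulrDr -/(w C a b c) E /Res; ring.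
Qed.

End Ex.


Section Un.
Variable C : numClosedFieldType.
Variable n : nat.
Local Notation I := 'I_n.

Definition Vx (T : I -> I -> I -> C) (a b c : I) (al be ga : C) : C :=
  V T (fun o => al * (o == a)%:R + be * (o == b)%:R + ga * (o == c)%:R).

Lemma sum_delta (F : I -> C) (a : I) : \sum_(k < n) F k * (k == a)%:R = F a.
Proof.
rewrite (bigD1 a) //= eqxx mulr1 big1 ?addr0 // => k /negbTE ->.
by rewrite mulr0.
Qed.

Lemma Vx_eq (T : I -> I -> I -> C) (a b c : I) (al be ga : C) :
  Vx T a b c al be ga = \sum_(pr : I * I | (pr.1 <= pr.2)%N)
    (al * Mk T pr.1 pr.2 a + be * Mk T pr.1 pr.2 b + ga * Mk T pr.1 pr.2 c) ^+ 3.
Proof.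
rewrite /Vx /V pair_big_dep /=; apply: eq_bigr => -[i j] _ /=.
rewrite linfE; congr (_ ^+ 3).
rewrite (eq_bigr (fun k => al * (Mk T i j k * (k == a)%:R) + be * (Mk T i j k * (k == b)%:R)
   + ga * (Mk T i j k * (k == c)%:R))); last by move=> k _; ring.
by rewrite !big_split /= -!mulr_sumr !sum_delta.
Qed.

Lemma G_pair (T : I -> I -> I -> C) (a b c : I) : G T a b c =
  \sum_(pr : I * I | (pr.1 <= pr.2)%N) Mk T pr.1 pr.2 a * Mk T pr.1 pr.2 b * Mk T pr.1 pr.2 c.
Proof. by rewrite /G pair_big_dep. Qed.

Lemma IE (T : I -> I -> I -> C) (a b c : I) : 6%:R * G T a b c =
  Vx T a b c 1 1 1 - Vx T a b c 1 1 0 - Vx T a b c 1 0 1 - Vx T a b c 0 1 1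
  + Vx T a b c 1 0 0 + Vx T a b c 0 1 0 + Vx T a b c 0 0 1.
Proof.
rewrite !Vx_eq G_pair -!sumrB -!big_split /= mulr_sumr.
by apply: eq_bigr => pr _; ring.
Qed.

Lemma G_eq (T T' : I -> I -> I -> C) : (forall x, V T x = V T' x) -> forall a b c, G T a b c = G T' a b c.
Proof.
move=> hV a b c; apply: (mulfI (natn0 C 5)).
by rewrite !IE /Vx !hV.
Qed.

Lemma alg (i j : I) (t t' : I -> C) : (i <= j)%N ->
  (forall l : I, (i <= l <= j)%N -> t i * t l * t j = t' i * t' l * t' j) ->
  ((i < j)%N -> t i != 0 /\ t j != 0) ->
  exists z : C, z ^+ 3 = 1 /\ forall k : I, (i <= k <= j)%N -> t' k = z * t k.
Proof.
move=> hij h hnz.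
have [eij|nij] := eqVneq i j.
  subst j; have hi := h i ltac:(by rewrite leqnn).
  have ki : forall k : I, (i <= k <= i)%N -> k = i.
    by move=> k /andP[h1 h2]; apply: val_inj; apply/eqP; rewrite eqn_leq h1 h2.
  have [ti0|ti0] := eqVneq (t i) 0.
    exists 1; split; first by rewrite expr1n.
    move=> k /ki ->; rewrite ti0 mulr0.
    have : t' i ^+ 3 == 0 by rewrite -[_ ^+ 3]/(t' i * (t' i * t' i)) mulrA -hi ti0 !mul0r.
    by rewrite expf_eq0 /= => /eqP.
  exists (t' i / t i); split.
    rewrite expr_div_n -[_ ^+ 3]/(t' i * (t' i * t' i)) mulrA -hi.
    rewrite -[_ ^+ 3]/(t i * (t i * t i)) mulrA divff //.
    by rewrite !mulf_neq0.
  by move=> k /ki ->; rewrite divfK.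
have hij' : (i < j)%N by rewrite ltn_neqAle hij andbT; exact: nij.
have [u0 v0] := hnz hij'.
have hii := h i ltac:(by rewrite leqnn hij).
have hjj := h j ltac:(by rewrite leqnn hij).
have u'0 : t' i != 0.
  apply/negP => /eqP e; move: hii; rewrite e !mul0r => /eqP; rewrite !mulf_eq0.
  by rewrite (negbTE u0) (negbTE v0).
have v'0 : t' j != 0.
  apply/negP => /eqP e; move: hii; rewrite e !mulr0 => /eqP; rewrite !mulf_eq0.
  by rewrite (negbTE u0) (negbTE v0).
set z := t' i / t i.
have eu : t' i = z * t i by rewrite /z divfK.
have e1 : t i * t' j * (t i * t' i * t j * t' j) = t' i * t j * (t i * t' i * t j * t' j).
  transitivity ((t i * t i * t j) * (t' i * t' j * t' j)); first by ring.
  rewrite hii -hjj; ring.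
have e2 : t i * t' j = t' i * t j.
  by apply: (mulIf _ e1); rewrite !mulf_neq0.
have ev : t' j = z * t j.
  apply: (mulfI u0); rewrite e2 /z; field; exact: u0.
have z3 : z ^+ 3 = 1.
  have : (t i * t i * t j) * z ^+ 3 = (t i * t i * t j) * 1.
    transitivity (t' i * t' i * t' j); first by rewrite eu ev; ring.
    by rewrite -hii mulr1.
  by move/(mulfI _) => -> //; rewrite !mulf_neq0.
exists z; split => // k hk.
have hk' := h k hk.
rewrite eu ev in hk'.
have e3 : t k = z ^+ 2 * t' k.
  apply: (mulIf (mulf_neq0 u0 v0)).
  transitivity (t i * t k * t j); first by ring.
  by rewrite hk'; ring.
by rewrite e3 mulrA -exprS z3 mul1r.
Qed.

Lemma uniq_ind (T T' : I -> I -> I -> C)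
  (hG : forall a b c, G T a b c = G T' a b c)
  (hp : forall i j : I, (i < j)%N -> T i j i != 0 /\ T i j j != 0) :
  forall i j : I, (i <= j)%N ->
  exists z : C, z ^+ 3 = 1 /\ forall k : I, (i <= k <= j)%N -> T' i j k = z * T i j k.
Proof.
suff H : forall e (i j : I), (i <= j)%N -> (n - spn i j <= e)%N ->
  exists z : C, z ^+ 3 = 1 /\ forall k : I, (i <= k <= j)%N -> T' i j k = z * T i j k.
  by move=> i j hij; exact: H _ _ _ hij (leqnn _).
elim=> [|e IH] i j hij he.
  by have := ltn_ord j; rewrite /spn in he; lia.
apply: alg => //; last by move=> /hp.
move=> l /andP[hil hlj].
have E := hG i l j.
rewrite !G_pair (bigD1 (i, j)) //= [RHS](bigD1 (i, j)) //= in E.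
have S : \sum_(pr : I * I | (pr.1 <= pr.2)%N && (pr != (i, j)))
           Mk T pr.1 pr.2 i * Mk T pr.1 pr.2 l * Mk T pr.1 pr.2 j =
         \sum_(pr : I * I | (pr.1 <= pr.2)%N && (pr != (i, j)))
           Mk T' pr.1 pr.2 i * Mk T' pr.1 pr.2 l * Mk T' pr.1 pr.2 j.
  apply: eq_bigr => -[a b] /= /andP[hab hne].
  rewrite /Mk /inr.
  case ha: (a <= i)%N; last by rewrite /= !mul0r.
  case hb: (j <= b)%N; last by rewrite !andbF !mulr0.
  have hsp : (n - spn a b <= e)%N.
    move: hne; rewrite xpair_eqE negb_and -!(inj_eq val_inj) /= => hne.
    rewrite /spn in he *.
    have := ltn_ord b.
    by case/orP: hne => /eqP hne; lia.
  have [z [z3 hz]] := IH a b hab hsp.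
  have -> : (a <= l <= b)%N by rewrite (leq_trans ha hil) (leq_trans hlj hb).
  have -> : (i <= b)%N by apply: leq_trans hij hb.
  have -> : (a <= j)%N by apply: leq_trans ha hij.
  rewrite /= !hz ?(leq_trans ha hil) ?(leq_trans hlj hb) ?ha ?hb ?leqnn ?hab
      ?(leq_trans ha hij) ?(leq_trans hij hb) //.
  rewrite (_ : z * T a b i * (z * T a b l) * (z * T a b j) =
                z ^+ 3 * (T a b i * T a b l * T a b j)); last by ring.
  by rewrite z3 mul1r.
rewrite S in E; move/addIr: E.
by rewrite /Mk /inr !leqnn hij hil hlj.
Qed.

End Un.


Section NZ.
Variable C : fieldType.
Variable V : Type.
Variable p0 : V -> C.
Local Notation pe := (polyexpr V C).

Definition NZ (P : (V -> C) -> Prop) : Prop :=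
  exists Q : pe, peval Q p0 != 0 /\ forall p, peval Q p != 0 -> P p.
Definition Good (f : (V -> C) -> C) : Prop :=
  exists num den : pe, NZ (fun p => peval den p != 0 /\ f p = peval num p / peval den p).

Lemma NZ_T : NZ (fun _ => True).
Proof. by exists (PConst _ 1); split => //=; rewrite oner_neq0. Qed.

Lemma NZ_and P R : NZ P -> NZ R -> NZ (fun p => P p /\ R p).
Proof.
move=> [Q1 [h1 H1]] [Q2 [h2 H2]]; exists (PMul Q1 Q2); split => /=.
  by rewrite mulf_neq0.
by move=> p; rewrite mulf_eq0 negb_or => /andP[/H1 ? /H2 ?].
Qed.

Lemma NZ_imp (P R : (V -> C) -> Prop) : NZ P -> (forall p, P p -> R p) -> NZ R.
Proof. by move=> [Q [h H]] HR; exists Q; split => // p /H /HR. Qed.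

Lemma NZ_seq (T : eqType) (s : seq T) (P : T -> (V -> C) -> Prop) :
  (forall t, NZ (P t)) -> NZ (fun p => forall t, t \in s -> P t p).
Proof.
move=> HP; elim: s => [|t s IH].
  by apply: NZ_imp NZ_T _ => p _ t.
apply: NZ_imp (NZ_and (HP t) IH) _ => p [h1 h2] u.
by rewrite in_cons => /orP[/eqP ->|/h2].
Qed.

Lemma NZ_fin (T : finType) (P : T -> (V -> C) -> Prop) :
  (forall t, NZ (P t)) -> NZ (fun p => forall t, P t p).
Proof.
move=> HP; apply: NZ_imp (NZ_seq (enum T) HP) _ => p H t.
by apply: H; rewrite mem_enum.
Qed.

Lemma NZ_p0 P : NZ P -> P p0.
Proof. by move=> [Q [h H]]; apply: H. Qed.

Lemma Good_const c : Good (fun _ => c).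
Proof.
exists (PConst _ c), (PConst _ 1); apply: NZ_imp NZ_T _ => p _ /=.
by rewrite oner_neq0 divr1.
Qed.

Lemma Good_var v : Good (fun p => p v).
Proof.
exists (PVar _ v), (PConst _ 1); apply: NZ_imp NZ_T _ => p _ /=.
by rewrite oner_neq0 divr1.
Qed.

Lemma Good_add f g : Good f -> Good g -> Good (fun p => f p + g p).
Proof.
move=> [nf [df Hf]] [ng [dg Hg]].
exists (PAdd (PMul nf dg) (PMul ng df)), (PMul df dg).
apply: NZ_imp (NZ_and Hf Hg) _ => p [[d1 e1] [d2 e2]] /=.
split; first by rewrite mulf_neq0.
by rewrite e1 e2; field; rewrite d1 d2.
Qed.

Lemma Good_mul f g : Good f -> Good g -> Good (fun p => f p * g p).
Proof.
move=> [nf [df Hf]] [ng [dg Hg]].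
exists (PMul nf ng), (PMul df dg).
apply: NZ_imp (NZ_and Hf Hg) _ => p [[d1 e1] [d2 e2]] /=.
split; first by rewrite mulf_neq0.
by rewrite e1 e2; field; rewrite d1 d2.
Qed.

Lemma Good_ext f g : Good g -> NZ (fun p => f p = g p) -> Good f.
Proof.
move=> [ng [dg Hg]] He; exists ng, dg.
by apply: NZ_imp (NZ_and Hg He) _ => p [[d1 e1] e2]; rewrite e2.
Qed.

Lemma Good_nz f : Good f -> f p0 != 0 -> NZ (fun p => f p != 0).
Proof.
move=> [nf [df Hf]] h0.
have [d0 e0] := NZ_p0 Hf.
have n0 : peval nf p0 != 0.
  by apply/negP => /eqP e; move: h0; rewrite e0 e mul0r eqxx.
have Hn : NZ (fun p => peval nf p != 0) by exists nf; split.
apply: NZ_imp (NZ_and Hf Hn) _ => p [[d1 e1] n1].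
by rewrite e1 mulf_neq0 // invr_neq0.
Qed.

Lemma Good_inv f : Good f -> f p0 != 0 -> Good (fun p => (f p)^-1).
Proof.
move=> [nf [df Hf]] h0.
have [d0 e0] := NZ_p0 Hf.
have n0 : peval nf p0 != 0.
  by apply/negP => /eqP e; move: h0; rewrite e0 e mul0r eqxx.
have Hn : NZ (fun p => peval nf p != 0) by exists nf; split.
exists df, nf; apply: NZ_imp (NZ_and Hf Hn) _ => p [[d1 e1] n1].
by split => //; rewrite e1 invf_div.
Qed.

Lemma Good_sum (T : Type) (s : seq T) (P : pred T) (F : T -> (V -> C) -> C) :
  (forall t, P t -> Good (F t)) -> Good (fun p => \sum_(t <- s | P t) F t p).
Proof.
move=> HF; elim: s => [|t s IH].
  by apply: Good_ext (Good_const 0) _; apply: NZ_imp NZ_T _ => p _; rewrite big_nil.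
case Pt: (P t).
  apply: Good_ext (Good_add (HF t Pt) IH) _; apply: NZ_imp NZ_T _ => p _.
  by rewrite big_cons Pt.
by apply: Good_ext IH _; apply: NZ_imp NZ_T _ => p _; rewrite big_cons Pt.
Qed.

End NZ.


Section Gen.
Variable C : numClosedFieldType.
Variable n : nat.
Local Notation I := 'I_n.

Definition p0 : cform C n := fun m =>
  w C (val m).1.1 (val m).1.2 (val m).2 *
  \sum_(i < n) \sum_(j < n | cont i j (val m).1.1 (val m).2) 1.

Lemma Pc_p0 (a b c : I) : (a <= b <= c)%N ->
  Pc p0 a b c = w C a b c * \sum_(i < n) \sum_(j < n | cont i j a c) 1.
Proof.
move=> h; rewrite /Pc; case: insubP => [m _ hm|]; first by rewrite /p0 hm.
by rewrite h.
Qed.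

Lemma Pc_good (a b c : I) : Good p0 (fun p => Pc p a b c).
Proof.
rewrite /Pc; case: (insub (a, b, c)) => [m|]; first exact: Good_var.
exact: Good_const.
Qed.

Lemma w_iii (i : I) : w C i i i = 1.
Proof. by rewrite /w /w3n eqxx. Qed.
Lemma w_iij (i j : I) : i != j -> w C i i j = 3%:R.
Proof. by move=> h; rewrite /w /w3n (negbTE (h : nat_of_ord i != nat_of_ord j)) eqxx. Qed.
Lemma w_ijj (i j : I) : i != j -> w C i j j = 3%:R.
Proof. by move=> h; rewrite /w /w3n (negbTE (h : nat_of_ord i != nat_of_ord j)) eqxx orbT. Qed.
Lemma w_ikj (i k j : I) : i != j -> i != k -> k != j -> w C i k j = 6%:R.
Proof.
move=> h1 h2 h3; rewrite /w /w3n (negbTE (h1 : nat_of_ord i != nat_of_ord j)).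
by rewrite (negbTE (h2 : nat_of_ord i != nat_of_ord k)) (negbTE (h3 : nat_of_ord k != nat_of_ord j)).
Qed.

Lemma Good_D : forall e (i j : I), (i <= j)%N -> (n - spn i j <= e)%N ->
  [/\ Good p0 (fun p => (D p i j).1), (forall k, Good p0 (fun p => (D p i j).2 k)),
      (D p0 i j).1 = 1 & (forall k : I, (i <= k <= j)%N -> (D p0 i j).2 k = 1)].
Proof.
elim=> [|e IH] i j hij he.
  by have := ltn_ord j; rewrite /spn in he; lia.
have IHb : forall i' j' k m, bigger i j i' j' k m ->
  [/\ Good p0 (fun p => (D p i' j').1), (forall k, Good p0 (fun p => (D p i' j').2 k)),
      (D p0 i' j').1 = 1 & (forall k : I, (i' <= k <= j')%N -> (D p0 i' j').2 k = 1)].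
  move=> i' j' k m /and4P[h1 h2 h3 h4]; apply: IH => //.
  by rewrite /spn in he h4 *; have := ltn_ord j'; lia.
have Rg : forall k l m, Good p0 (fun p => Res (D p) p i j k l m).
  move=> k l m.
  apply: (@Good_ext _ _ _ _ (fun p => Pc p k l m + (- w C k l m) *
     \sum_(i' < n) \sum_(j' < n | bigger i j i' j' k m) cub (D p i' j') k l m)).
    apply: Good_add; first exact: Pc_good.
    apply: Good_mul; first exact: Good_const.
    apply: Good_sum => i' _; apply: Good_sum => j' hb.
    have [g1 g2 _ _] := IHb _ _ _ _ hb.
    rewrite /cub; apply: Good_mul; [apply: Good_mul; [apply: Good_mul|]|] => //.
  by apply: NZ_imp (NZ_T _) _ => p _; rewrite /Res mulNr.
have R0 : forall l : I, (i <= l <= j)%N -> Res (D p0) p0 i j i l j = w C i l j.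
  move=> l hl; rewrite /Res Pc_p0 // (split_cont (fun _ _ => 1)) //.
  have S : \sum_(i' < n) \sum_(j' < n | bigger i j i' j' i j) cub (D p0 i' j') i l j =
           \sum_(i' < n) \sum_(j' < n | bigger i j i' j' i j) 1.
    apply: eq_bigr => i' _; apply: eq_bigr => j' hb.
    have [_ _ k1 k2] := IHb _ _ _ _ hb.
    move: hb => /and4P[h1 h2 h3 h4].
    case/andP: hl => hl1 hl2.
    rewrite /cub k1 !k2 ?mulr1 // ?h2 ?(leq_trans hij h3) ?(leq_trans h2 hl1)
       ?(leq_trans hl2 h3) ?(leq_trans h2 hij) ?h3 //.
  rewrite S.
  by ring.
have Dfix : forall p, D p i j = step i j (Res (D p) p i j) := fun p => D_fix p hij.
have [eij|nij] := eqVneq i j.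
  subst j; split.
  - apply: Good_ext (Rg i i i) _; apply: NZ_imp (NZ_T _) _ => p _.
    by rewrite Dfix /step eqxx.
  - move=> k; apply: Good_ext (Good_const _ 1) _; apply: NZ_imp (NZ_T _) _ => p _.
    by rewrite Dfix /step eqxx.
  - by rewrite Dfix /step eqxx /= R0 ?leqnn // w_iii.
  - by move=> k _; rewrite Dfix /step eqxx.
have hij' : (i < j)%N by rewrite ltn_neqAle hij andbT; exact: nij.
have n3 := natn0 C 2; have n6 := natn0 C 5.
have G1 : Good p0 (fun p => Res (D p) p i j i i j / 3%:R).
  by apply: Good_mul; [exact: Rg|exact: Good_const].
have G2 : Good p0 (fun p => Res (D p) p i j i j j / 3%:R).
  by apply: Good_mul; [exact: Rg|exact: Good_const].
have V1 : Res (D p0) p0 i j i i j / 3%:R = 1.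
  by rewrite R0 ?leqnn ?hij // w_iij // divff.
have V2 : Res (D p0) p0 i j i j j / 3%:R = 1.
  by rewrite R0 ?leqnn ?hij // w_ijj // divff.
have G1i := Good_inv G1 ltac:(by rewrite /= V1 oner_neq0).
have G2i := Good_inv G2 ltac:(by rewrite /= V2 oner_neq0).
split.
- apply: Good_ext (Good_mul (Good_mul G1 G1) G2i) _; apply: NZ_imp (NZ_T _) _ => p _.
  by rewrite Dfix /step (negbTE nij) /= expr2.
- move=> k.
  have [eki|nki] := eqVneq k i.
    apply: Good_ext (Good_const _ 1) _; apply: NZ_imp (NZ_T _) _ => p _.
    by rewrite Dfix /step (negbTE nij) /= eki eqxx.
  have [ekj|nkj] := eqVneq k j.
    apply: Good_ext (Good_mul G2 G1i) _; apply: NZ_imp (NZ_T _) _ => p _.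
    by rewrite Dfix /step (negbTE nij) /= (negbTE nki) ekj eqxx.
  apply: Good_ext (Good_mul (Good_mul (Rg i k j) (Good_const _ 6%:R^-1)) G1i) _.
  apply: NZ_imp (NZ_T _) _ => p _.
  by rewrite Dfix /step (negbTE nij) /= (negbTE nki) (negbTE nkj).
- by rewrite Dfix /step (negbTE nij) /= V1 V2 expr1n divr1.
- move=> k hk; rewrite Dfix /step (negbTE nij) /=.
  have [eki|nki] := eqVneq k i; first by [].
  have [ekj|nkj] := eqVneq k j; first by rewrite V1 V2 divr1.
  rewrite V1 divr1 R0 // w_ikj // ?divff //; first by rewrite eq_sym.
Qed.

Lemma bigger_good (i j i' j' k m : I) : bigger i j i' j' k m ->
  [/\ Good p0 (fun p => (D p i' j').1), (forall k, Good p0 (fun p => (D p i' j').2 k)),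
      (D p0 i' j').1 = 1 & (forall k : I, (i' <= k <= j')%N -> (D p0 i' j').2 k = 1)].
Proof.
move=> /and4P[h1 h2 h3 h4]; apply: (@Good_D (n - spn i' j')) => //.
Qed.

Lemma Res_good (i j k l m : I) : Good p0 (fun p => Res (D p) p i j k l m).
Proof.
apply: (@Good_ext _ _ _ _ (fun p => Pc p k l m + (- w C k l m) *
   \sum_(i' < n) \sum_(j' < n | bigger i j i' j' k m) cub (D p i' j') k l m)).
  apply: Good_add; first exact: Pc_good.
  apply: Good_mul; first exact: Good_const.
  apply: Good_sum => i' _; apply: Good_sum => j' hb.
  have [g1 g2 _ _] := bigger_good hb.
  rewrite /cub; apply: Good_mul; [apply: Good_mul; [apply: Good_mul|]|] => //.
by apply: NZ_imp (NZ_T _) _ => p _; rewrite /Res mulNr.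
Qed.

Lemma Res_p0 (i j l : I) : (i <= l <= j)%N -> Res (D p0) p0 i j i l j = w C i l j.
Proof.
move=> hl; have hij : (i <= j)%N by case/andP: hl; apply: leq_trans.
rewrite /Res Pc_p0 // (split_cont (fun _ _ => 1)) //.
have S : \sum_(i' < n) \sum_(j' < n | bigger i j i' j' i j) cub (D p0 i' j') i l j =
         \sum_(i' < n) \sum_(j' < n | bigger i j i' j' i j) 1.
  apply: eq_bigr => i' _; apply: eq_bigr => j' hb.
  have [_ _ k1 k2] := bigger_good hb.
  move: hb => /and4P[h1 h2 h3 h4].
  case/andP: hl => hl1 hl2.
  rewrite /cub k1 !k2 ?mulr1 // ?h2 ?(leq_trans hij h3) ?(leq_trans h2 hl1)
     ?(leq_trans hl2 h3) ?(leq_trans h2 hij) ?h3 //.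
rewrite S; ring.
Qed.

Lemma NZ_piv : NZ p0 (@piv C n).
Proof.
apply: NZ_fin => i; apply: NZ_fin => j.
case hij: (i < j)%N; last by apply: NZ_imp (NZ_T _) _ => p _.
have nij : i != j by rewrite neq_ltn hij.
have A1 : NZ p0 (fun p => Res (D p) p i j i i j != 0).
  apply: (Good_nz (Res_good i j i i j)); rewrite /= Res_p0; last by rewrite leqnn (ltnW hij).
  by rewrite w_iij //; exact: natn0.
have A2 : NZ p0 (fun p => Res (D p) p i j i j j != 0).
  apply: (Good_nz (Res_good i j i j j)); rewrite /= Res_p0; last by rewrite leqnn (ltnW hij).
  by rewrite w_ijj //; exact: natn0.
by apply: NZ_imp (NZ_and A1 A2) _ => p [h1 h2] _.
Qed.

Lemma root3_neq0 (x : C) : x != 0 -> 3.-root x != 0.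
Proof.
move=> hx; apply/negP => /eqP h; move: hx.
by rewrite -(@rootCK C 3 isT x) h expr0n /= eqxx.
Qed.

Lemma Tr_nz (p : cform C n) : piv p -> forall i j : I, (i < j)%N -> Tr p i j i != 0 /\ Tr p i j j != 0.
Proof.
move=> hp i j hij; have [h1 h2] := hp i j hij.
have nij : i != j by rewrite neq_ltn hij.
have n3 := natn0 C 2.
rewrite /Tr D_fix ?(ltnW hij) // /step (negbTE nij) /= eqxx.
have nji : (j == i) = false by rewrite eq_sym (negbTE nij).
rewrite nji eqxx.
have g1 : Res (D p) p i j i i j / 3%:R != 0 by rewrite mulf_neq0 ?invr_neq0.
have g2 : Res (D p) p i j i j j / 3%:R != 0 by rewrite mulf_neq0 ?invr_neq0.
have r0 : 3.-root ((Res (D p) p i j i i j / 3%:R) ^+ 2 / (Res (D p) p i j i j j / 3%:R)) != 0.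
  by apply: root3_neq0; rewrite mulf_neq0 ?expf_neq0 ?invr_neq0.
by split; rewrite ?mulr1 // mulf_neq0 // mulf_neq0 ?invr_neq0.
Qed.

Lemma main_gen : general (fun p : cform C n => unique_rep p).
Proof.
have [Q [hQ0 HQ]] : NZ p0 (fun p : cform C n => unique_rep p).
  apply: NZ_imp NZ_piv _ => p hp.
  exists (Tr p); split; first exact: existence.
  move=> T' hT'.
  have hV : forall x, V (Tr p) x = V T' x.
    move=> x; transitivity (eval_form p x); first by symmetry; exact: existence hp x.
    exact: hT' x.
  move=> i j hij; exact: (@uniq_ind C n (Tr p) T' (G_eq hV) (Tr_nz hp) i j hij).
by exists Q; split; [exists p0|].
Qed.

End Gen.

Unset Implicit Arguments.
Theorem theorem1p4 (C : numClosedFieldType) (n : nat) (hn : (1 <= n)%N) :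
  general (fun p : cform C n => unique_rep p).
Proof. exact: main_gen. Qed.
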